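(* $\mathfrak a_{11}(n)=\mathfrak a_{16}(n)$ for all $n\ge4$, and $\mathfrak a_{13}(n)=\mathfrak a_{20}(n)$ for all $n\ge3$.
   Context: Pauli matrices $I,X,Y,Z$; $A_jB_{j+1}$ denotes the length-$n$ Pauli string with $A$ at position $j$, $B$ at $j+1$, $I$ elsewhere. For a set $S$ of Pauli strings, $\mathrm{Lie}\langle S\rangle$ is the smallest real Lie subalgebra of $\mathfrak u(2^n)$ containing $\{iP:P\in S\}$. For a set $G$ of two-qubit strings, $G(n)=\mathrm{Lie}\langle A_jB_{j+1}:AB\in G,1\le j\le n-1\rangle$. Generating sets: $\mathfrak a_{11}=\{XY,YX,YZ\}$, $\mathfrak a_{16}=\{XY,YX,YZ,ZY\}$, $\mathfrak a_{13}=\{XX,YY,YZ\}$, $\mathfrak a_{20}=\{XX,YY,ZZ,ZY\}$. *)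

(* Defs.v *)
From HB Require Import structures.
From mathcomp Require Import all_boot all_order all_algebra.
From mathcomp Require Import complex.
From mathcomp Require Import Rstruct.
Set Implicit Arguments. Unset Strict Implicit. Unset Printing Implicit Defensive.
Import Order.TTheory GRing.Theory Num.Theory.
Local Open Scope ring_scope.
Local Open Scope complex_scope.

Definition C := complex Rdefinitions.R.

Inductive pauli := pI | pX | pY | pZ.

Definition pauli_eqb (a b : pauli) : bool :=
  match a, b with
  | pI, pI | pX, pX | pY, pY | pZ, pZ => true
  | _, _ => false
  end.

Definition pauli_entry (P : pauli) (r c : bool) : C :=
  match P with
  | pI => if r == c then 1 else 0
  | pX => if r == c then 0 else 1
  | pY => if r == c then 0 else (if r then 'i else - 'i)   (* Y = [[0,-i],[i,0]] *)
  | pZ => if r == c then (if r then -1 else 1) else 0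
  end.

(* bit of index r corresponding to qubit k (0-indexed, qubit 0 = most
   significant, matching the Kronecker product P_0 (x) ... (x) P_{n-1}) *)
Definition qbit (n k r : nat) : bool := odd (r %/ 2 ^ (n - k.+1)).

(* The Pauli string with P k at position k, as a 2^n x 2^n complex matrix:
   the Kronecker product P 0 (x) P 1 (x) ... (x) P (n-1). *)
Definition pauli_string (n : nat) (P : nat -> pauli) : 'M[C]_(2 ^ n) :=
  \matrix_(r, c) \prod_(k < n) pauli_entry (P k) (qbit n k r) (qbit n k c).

Definition two_site (A B : pauli) (j : nat) : nat -> pauli :=
  fun k => if k == j then A else if k == j.+1 then B else pI.

(* Lie<S>: smallest real Lie subalgebra of 'M[C]_N containing S
   (real span + closure under commutator). *)
Inductive lie_closure (N : nat) (S : 'M[C]_N -> Prop) : 'M[C]_N -> Prop :=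
  | lc_gen M : S M -> lie_closure S M
  | lc_zero : lie_closure S 0
  | lc_add M1 M2 : lie_closure S M1 -> lie_closure S M2 -> lie_closure S (M1 + M2)
  | lc_scale (r : Rdefinitions.R) M : lie_closure S M -> lie_closure S ((r%:C) *: M)
  | lc_bracket M1 M2 : lie_closure S M1 -> lie_closure S M2 ->
      lie_closure S (M1 *m M2 - M2 *m M1).

(* G(n) = Lie< i A_j B_{j+1} : AB in G, 1 <= j <= n-1 >  (here 0 <= j, j+1 < n) *)
Definition Gn (G : seq (pauli * pauli)) (n : nat) : 'M[C]_(2 ^ n) -> Prop :=
  lie_closure (fun M => exists A B j,
    has (fun ab => pauli_eqb ab.1 A && pauli_eqb ab.2 B) G /\ (ltn j.+1 n) /\
    M = 'i *: pauli_string n (two_site A B j)).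

Definition a11 : seq (pauli * pauli) := [:: (pX, pY); (pY, pX); (pY, pZ)].
Definition a16 : seq (pauli * pauli) := [:: (pX, pY); (pY, pX); (pY, pZ); (pZ, pY)].
Definition a13 : seq (pauli * pauli) := [:: (pX, pX); (pY, pY); (pY, pZ)].
Definition a20 : seq (pauli * pauli) := [:: (pX, pX); (pY, pY); (pZ, pZ); (pZ, pY)].

(* Main.v *)
From HB Require Import structures.
Require Import Defs.
From mathcomp Require Import all_boot all_order all_algebra complex Rstruct.
From mathcomp Require Import ring lra.
Set Implicit Arguments. Unset Strict Implicit. Unset Printing Implicit Defensive.
Import Order.TTheory GRing.Theory Num.Theory.
Local Open Scope ring_scope.
Local Open Scope complex_scope.

Lemma sum_double (g : nat -> C) m :
  \sum_(0 <= s < (2 * m)%N) g s = \sum_(0 <= s < m) (g (2 * s)%N + g (2 * s).+1).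
Proof.
elim: m => [|m IH]; first by rewrite !big_nil.
rewrite mulnS !addSn add0n big_nat_recr //= big_nat_recr //= IH big_nat_recr //=.
by rewrite addrA.
Qed.

Lemma qbit_last n s (b : bool) : qbit n.+1 n (2 * s + b) = b.
Proof.
rewrite /qbit subnn expn0 divn1 oddD oddM /=; by case: b.
Qed.

Lemma qbit_low n k s (b : bool) : (k < n)%N -> qbit n.+1 k (2 * s + b) = qbit n k s.
Proof.
move=> kn; rewrite /qbit subSS.
have -> : (n - k = (n - k.+1).+1)%N by rewrite subnSK.
rewrite expnS divnMA; congr (odd (_ %/ _)).
rewrite mulnC divnMDl // divn_small ?addn0 //; by case: b.
Qed.

Lemma qsum n (f : nat -> bool -> C) :
  \sum_(s < 2 ^ n) \prod_(k < n) f k (qbit n k s) = \prod_(k < n) (f k false + f k true).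
Proof.
elim: n f => [|n IH] f.
  by rewrite expn0 big_ord1 !big_ord0.
rewrite -(big_mkord xpredT (fun s => \prod_(k < n.+1) f k (qbit n.+1 k s))) expnS sum_double.
rewrite big_ord_recr /= -(IH f) big_mkord mulr_suml; apply: eq_bigr => s _.
rewrite !big_ord_recr /=.
rewrite -[(2 * s)%N]addn0 -[(2 * s + 0).+1]addn1 -addnA.
have E : forall b : bool, \prod_(i < n) f i (qbit n.+1 i (2 * s + b)) = \prod_(i < n) f i (qbit n i s).
  by move=> b; apply: eq_bigr => i _; rewrite qbit_low.
rewrite (E false) (E true) (qbit_last n s false) (qbit_last n s true).
by rewrite mulrDr.
Qed.

Definition pmul (a b : pauli) : pauli :=
  match a, b with
  | pI, x | x, pI => x
  | pX, pX | pY, pY | pZ, pZ => pI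
  | pX, pY | pY, pX => pZ
  | pY, pZ | pZ, pY => pX
  | pZ, pX | pX, pZ => pY
  end.

Definition pe (a b : pauli) : nat :=
  match a, b with
  | pX, pY | pY, pZ | pZ, pX => 1
  | pY, pX | pZ, pY | pX, pZ => 3
  | _, _ => 0
  end.

Lemma ii : 'i * 'i = -1 :> C.
Proof. by rewrite -expr2 sqr_i. Qed.

Lemma i3 : 'i ^+ 3 = - 'i :> C.
Proof. by rewrite exprS sqr_i mulrN1. Qed.

Lemma pauli_mul1 P Q (r c : bool) :
  pauli_entry P r false * pauli_entry Q false c + pauli_entry P r true * pauli_entry Q true c
  = 'i ^+ (pe P Q) * pauli_entry (pmul P Q) r c.
Proof.
case: P; case: Q; case: r; case: c;
  rewrite /= ?i3 ?expr1 ?expr0 ?(mul0r, mulr0, add0r, addr0, mul1r, mulr1, mulNr, mulrN, ii, opprK) //.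
Qed.

Lemma mul_string n P Q :
  pauli_string n P *m pauli_string n Q =
  (\prod_(k < n) 'i ^+ pe (P k) (Q k)) *: pauli_string n (fun k => pmul (P k) (Q k)).
Proof.
apply/matrixP => r c; rewrite !mxE.
under eq_bigr do rewrite !mxE -big_split /=.
rewrite (qsum n (fun k b => pauli_entry (P k) (qbit n k r) b * pauli_entry (Q k) b (qbit n k c))).
rewrite -big_split /=; apply: eq_bigr => k _; exact: pauli_mul1.
Qed.

Lemma eq_string n P Q : (forall k, P k = Q k) -> pauli_string n P = pauli_string n Q.
Proof. by move=> E; apply/matrixP => r c; rewrite !mxE; apply: eq_bigr => k _; rewrite E. Qed.

Lemma pmulC a b : pmul a b = pmul b a.
Proof. by case: a; case: b. Qed.

Definition loc (w : nat) (l : seq pauli) : nat -> pauli :=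
  fun k => if (w <= k)%N then nth pI l (k - w) else pI.

Fixpoint zipp (l1 l2 : seq pauli) : seq pauli :=
  match l1, l2 with
  | a :: t, b :: u => pmul a b :: zipp t u
  | [::], u => u
  | t, [::] => t
  end.

Fixpoint wsum (l1 l2 : seq pauli) : nat :=
  match l1, l2 with
  | a :: t, b :: u => (pe a b + wsum t u)%N
  | _, _ => 0%N
  end.

Lemma nth_zipp l1 l2 i : nth pI (zipp l1 l2) i = pmul (nth pI l1 i) (nth pI l2 i).
Proof.
elim: l1 l2 i => [|a t IH] [|b u] [|i] //=; rewrite ?nth_nil //; by case: (nth _ _ _) || case: a.
Qed.

Lemma loc_zipp w l1 l2 k : pmul (loc w l1 k) (loc w l2 k) = loc w (zipp l1 l2) k.
Proof. by rewrite /loc; case: (w <= k)%N; rewrite ?nth_zipp. Qed.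

Lemma loc_nil w k : loc w [::] k = pI.
Proof. by rewrite /loc nth_nil; case: ifP. Qed.

Lemma loc_cons w a t k : loc w (a :: t) k = if k == w then a else loc w.+1 t k.
Proof.
rewrite /loc; case: (ltngtP k w) => H; rewrite ?H.
- by [].
- by have -> : (k - w = (k - w.+1).+1)%N by rewrite subnS prednK // subn_gt0.
- by rewrite subnn.
Qed.

Lemma sum_pe_loc n w l1 l2 : (w + size l1 <= n)%N ->
  (\sum_(k < n) pe (loc w l1 k) (loc w l2 k))%N = wsum l1 l2.
Proof.
elim: l1 l2 w => [|a t IH] l2 w Hn.
  by rewrite big1 // => k _; rewrite loc_nil; case: (loc _ _ _).
case: l2 => [|b u].
  by rewrite big1 //= => k _; rewrite loc_nil; case: (loc _ _ _).
rewrite /= -(IH u w.+1); last by rewrite addSnnS.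
have wn : (w < n)%N by move: Hn => /=; rewrite addnS => H; apply: leq_trans H; rewrite ltnS leq_addr.
rewrite (bigD1 (Ordinal wn)) //= (bigD1 (Ordinal wn) isT (F := fun k : 'I_n => pe (loc w.+1 t k) (loc w.+1 u k))) /=.
rewrite !loc_cons eqxx [loc w.+1 t w]/loc [loc w.+1 u w]/loc ltnn add0n; congr (_ + _)%N.
apply: eq_bigr => k /= kw; rewrite !loc_cons.
by have -> : (nat_of_ord k == w) = false by apply/negbTE; move: kw; apply: contra => /eqP H; apply/eqP/val_inj.
Qed.

Lemma ipow_mod a : 'i ^+ a = 'i ^+ (a %% 4) :> C.
Proof.
rewrite {1}(divn_eq a 4) exprD mulnC exprM.
have -> : 'i ^+ 4 = 1 :> C by rewrite (exprM _ 2 2) sqr_i expr2 mulrNN mulr1.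
by rewrite expr1n mul1r.
Qed.

Lemma key n w la lb : (w + size la <= n)%N ->
  pauli_string n (loc w la) *m pauli_string n (loc w lb) =
  'i ^+ (wsum la lb %% 4) *: pauli_string n (loc w (zipp la lb)).
Proof.
move=> H; rewrite mul_string prodrXr sum_pe_loc // -ipow_mod; congr (_ *: _).
by apply: eq_string => k; exact: loc_zipp.
Qed.

Lemma zippC w l1 l2 k : loc w (zipp l2 l1) k = loc w (zipp l1 l2) k.
Proof. by rewrite -!loc_zipp pmulC. Qed.

Lemma c1 : ((-1/2 : Rdefinitions.R)%:C) * ('i * 'i * 'i ^+ 1 - 'i * 'i * 'i ^+ 3) = 'i :> C.
Proof. rewrite i3 expr1; apply/eqP; rewrite eq_complex /=; apply/andP; split; apply/eqP; lra. Qed.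

Lemma c2 : ((1/2 : Rdefinitions.R)%:C) * ('i * 'i * 'i ^+ 3 - 'i * 'i * 'i ^+ 1) = 'i :> C.
Proof. rewrite i3 expr1; apply/eqP; rewrite eq_complex /=; apply/andP; split; apply/eqP; lra. Qed.

Lemma br n (S : 'M[C]_(2 ^ n) -> Prop) w l1 l2 :
  lie_closure S ('i *: pauli_string n (loc w l1)) ->
  lie_closure S ('i *: pauli_string n (loc w l2)) ->
  (w + size l1 <= n)%N -> (w + size l2 <= n)%N ->
  ((wsum l1 l2 %% 4 == 1)%N && (wsum l2 l1 %% 4 == 3)%N) ||
  ((wsum l1 l2 %% 4 == 3)%N && (wsum l2 l1 %% 4 == 1)%N) ->
  lie_closure S ('i *: pauli_string n (loc w (zipp l1 l2))).
Proof.
move=> H1 H2 s1 s2 cond.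
have E (r : Rdefinitions.R) := lc_scale r (lc_bracket H1 H2).
move: E; rewrite -!scalemxAl -!scalemxAr !scalerA (key _ s1) (key _ s2).
rewrite (eq_string n (zippC w l1 l2)) => E.
case/orP: cond => /andP [/eqP e1 /eqP e2]; rewrite e1 e2 in E.
- move: (E (-1/2)); by rewrite !scalerA -scalerBl scalerA c1.
- move: (E (1/2)); by rewrite !scalerA -scalerBl scalerA c2.
Qed.

Definition pauli_eqP : Equality.axiom pauli_eqb.
Proof. by case; case; constructor. Qed.
HB.instance Definition _ := hasDecEq.Build pauli pauli_eqP.

Lemma lc_mono N (S S' : 'M[C]_N -> Prop) :
  (forall M, S M -> lie_closure S' M) -> forall M, lie_closure S M -> lie_closure S' M.
Proof.
move=> HS M; elim => {M} [M /HS //| | M1 M2 _ h1 _ h2 | r M _ h | M1 M2 _ h1 _ h2].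
- exact: lc_zero.
- exact: lc_add.
- exact: lc_scale.
- exact: lc_bracket.
Qed.

Definition isgen (A B : pauli) (m : nat) (l : seq pauli) : bool :=
  (m.+2 <= size l)%N &&
  all (fun i => nth pI l i == (if i == m then A else if i == m.+1 then B else pI)) (iota 0 (size l)).

Lemma isgen_loc A B m l w k : isgen A B m l -> loc w l k = two_site A B (w + m) k.
Proof.
case/andP => sz /allP Hall; rewrite /loc /two_site.
case: (leqP w k) => wk; last first.
  have -> : (k == w + m)%N = false by apply/negbTE; rewrite neq_ltn (leq_trans wk) ?leq_addr.
  have -> : (k == (w + m).+1)%N = false by apply/negbTE; rewrite neq_ltn (leq_trans wk) // -addnS leq_addr.
  by [].
have E1 : (k == w + m)%N = (k - w == m)%N by rewrite -(eqn_add2l w (k - w)) subnKC.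
have E2 : (k == (w + m).+1)%N = (k - w == m.+1)%N by rewrite -(eqn_add2l w (k - w)) subnKC // addnS.
rewrite E1 E2.
case: (ltnP (k - w) (size l)) => ks.
  by apply/eqP; apply: Hall; rewrite mem_iota add0n ks.
rewrite nth_default //.
have h1 : (m.+1 < k - w)%N by apply: leq_trans sz ks.
by rewrite (gtn_eqF (ltnW h1)) (gtn_eqF h1).
Qed.

Definition okgen (G : seq (pauli * pauli)) (l : seq pauli) : bool :=
  has (fun ab => has (fun m => isgen ab.1 ab.2 m l) (iota 0 (size l))) G.

Lemma pauli_eqb_refl a : pauli_eqb a a.
Proof. by case: a. Qed.

Lemma gen_in G n w l : okgen G l -> (w + size l <= n)%N -> @Gn G n ('i *: pauli_string n (loc w l)).
Proof.
case/hasP => ab abG /hasP [m _ hm] H.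
apply: lc_gen; exists ab.1, ab.2, (w + m)%N; split.
  by apply/hasP; exists ab => //; rewrite !pauli_eqb_refl.
split.
  case/andP: hm => sz _; by apply: leq_trans H; rewrite -addnS -addnS leq_add2l.
by rewrite (eq_string n (fun k => isgen_loc w k hm)).
Qed.

Lemma tgt n A B m l w (M : 'M[C]_(2 ^ n)) (S' : 'M[C]_(2 ^ n) -> Prop) :
  isgen A B m l -> M = 'i *: pauli_string n (two_site A B (w + m)) ->
  lie_closure S' ('i *: pauli_string n (loc w l)) -> lie_closure S' M.
Proof. by move=> hg -> ; rewrite (eq_string n (fun k => isgen_loc w k hg)). Qed.
Lemma d11a n w : (w + 4 <= n)%N -> @Gn a11 n ('i *: pauli_string n (loc w [:: pZ; pY; pI; pI])).
Proof.
move=> H.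
have s_YZII : @Gn a11 n ('i *: pauli_string n (loc w [:: pY; pZ; pI; pI])) := gen_in (G := a11) (l := [:: pY; pZ; pI; pI]) isT H.
have s_IXYI : @Gn a11 n ('i *: pauli_string n (loc w [:: pI; pX; pY; pI])) := gen_in (G := a11) (l := [:: pI; pX; pY; pI]) isT H.
have s_YXII : @Gn a11 n ('i *: pauli_string n (loc w [:: pY; pX; pI; pI])) := gen_in (G := a11) (l := [:: pY; pX; pI; pI]) isT H.
have s_IIXY : @Gn a11 n ('i *: pauli_string n (loc w [:: pI; pI; pX; pY])) := gen_in (G := a11) (l := [:: pI; pI; pX; pY]) isT H.
have s_IYZI : @Gn a11 n ('i *: pauli_string n (loc w [:: pI; pY; pZ; pI])) := gen_in (G := a11) (l := [:: pI; pY; pZ; pI]) isT H.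
have s_XYII : @Gn a11 n ('i *: pauli_string n (loc w [:: pX; pY; pI; pI])) := gen_in (G := a11) (l := [:: pX; pY; pI; pI]) isT H.
have s_IYXI : @Gn a11 n ('i *: pauli_string n (loc w [:: pI; pY; pX; pI])) := gen_in (G := a11) (l := [:: pI; pY; pX; pI]) isT H.
have s_YYYI : @Gn a11 n ('i *: pauli_string n (loc w [:: pY; pY; pY; pI])) := br s_YZII s_IXYI H H isT.
have s_IZYI : @Gn a11 n ('i *: pauli_string n (loc w [:: pI; pZ; pY; pI])) := br s_YXII s_YYYI H H isT.
have s_IYYY : @Gn a11 n ('i *: pauli_string n (loc w [:: pI; pY; pY; pY])) := br s_IIXY s_IYZI H H isT.
have s_XZYI : @Gn a11 n ('i *: pauli_string n (loc w [:: pX; pZ; pY; pI])) := br s_XYII s_IXYI H H isT.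
have s_XXIY : @Gn a11 n ('i *: pauli_string n (loc w [:: pX; pX; pI; pY])) := br s_IYYY s_XZYI H H isT.
have s_IXZY : @Gn a11 n ('i *: pauli_string n (loc w [:: pI; pX; pZ; pY])) := br s_IIXY s_IXYI H H isT.
have s_YXXI : @Gn a11 n ('i *: pauli_string n (loc w [:: pY; pX; pX; pI])) := br s_IYXI s_YZII H H isT.
have s_YIYY : @Gn a11 n ('i *: pauli_string n (loc w [:: pY; pI; pY; pY])) := br s_IXZY s_YXXI H H isT.
have s_ZXYI : @Gn a11 n ('i *: pauli_string n (loc w [:: pZ; pX; pY; pI])) := br s_XXIY s_YIYY H H isT.
have s_ZYII : @Gn a11 n ('i *: pauli_string n (loc w [:: pZ; pY; pI; pI])) := br s_IZYI s_ZXYI H H isT.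
exact: s_ZYII.
Qed.

Lemma d11b n w : (w + 3 <= n)%N -> @Gn a11 n ('i *: pauli_string n (loc w [:: pI; pZ; pY])).
Proof.
move=> H.
have s_YZI : @Gn a11 n ('i *: pauli_string n (loc w [:: pY; pZ; pI])) := gen_in (G := a11) (l := [:: pY; pZ; pI]) isT H.
have s_IXY : @Gn a11 n ('i *: pauli_string n (loc w [:: pI; pX; pY])) := gen_in (G := a11) (l := [:: pI; pX; pY]) isT H.
have s_YXI : @Gn a11 n ('i *: pauli_string n (loc w [:: pY; pX; pI])) := gen_in (G := a11) (l := [:: pY; pX; pI]) isT H.
have s_YYY : @Gn a11 n ('i *: pauli_string n (loc w [:: pY; pY; pY])) := br s_YZI s_IXY H H isT.
have s_IZY : @Gn a11 n ('i *: pauli_string n (loc w [:: pI; pZ; pY])) := br s_YXI s_YYY H H isT.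
exact: s_IZY.
Qed.

Lemma d13a n w : (w + 3 <= n)%N -> @Gn a13 n ('i *: pauli_string n (loc w [:: pZ; pZ; pI])).
Proof.
move=> H.
have s_XXI : @Gn a13 n ('i *: pauli_string n (loc w [:: pX; pX; pI])) := gen_in (G := a13) (l := [:: pX; pX; pI]) isT H.
have s_IYZ : @Gn a13 n ('i *: pauli_string n (loc w [:: pI; pY; pZ])) := gen_in (G := a13) (l := [:: pI; pY; pZ]) isT H.
have s_YZI : @Gn a13 n ('i *: pauli_string n (loc w [:: pY; pZ; pI])) := gen_in (G := a13) (l := [:: pY; pZ; pI]) isT H.
have s_IYY : @Gn a13 n ('i *: pauli_string n (loc w [:: pI; pY; pY])) := gen_in (G := a13) (l := [:: pI; pY; pY]) isT H.
have s_IXX : @Gn a13 n ('i *: pauli_string n (loc w [:: pI; pX; pX])) := gen_in (G := a13) (l := [:: pI; pX; pX]) isT H.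
have s_XZZ : @Gn a13 n ('i *: pauli_string n (loc w [:: pX; pZ; pZ])) := br s_XXI s_IYZ H H isT.
have s_YXY : @Gn a13 n ('i *: pauli_string n (loc w [:: pY; pX; pY])) := br s_YZI s_IYY H H isT.
have s_ZYX : @Gn a13 n ('i *: pauli_string n (loc w [:: pZ; pY; pX])) := br s_XZZ s_YXY H H isT.
have s_ZZI : @Gn a13 n ('i *: pauli_string n (loc w [:: pZ; pZ; pI])) := br s_IXX s_ZYX H H isT.
exact: s_ZZI.
Qed.

Lemma d13b n w : (w + 3 <= n)%N -> @Gn a13 n ('i *: pauli_string n (loc w [:: pI; pZ; pZ])).
Proof.
move=> H.
have s_YZI : @Gn a13 n ('i *: pauli_string n (loc w [:: pY; pZ; pI])) := gen_in (G := a13) (l := [:: pY; pZ; pI]) isT H.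
have s_IYZ : @Gn a13 n ('i *: pauli_string n (loc w [:: pI; pY; pZ])) := gen_in (G := a13) (l := [:: pI; pY; pZ]) isT H.
have s_YYI : @Gn a13 n ('i *: pauli_string n (loc w [:: pY; pY; pI])) := gen_in (G := a13) (l := [:: pY; pY; pI]) isT H.
have s_YXZ : @Gn a13 n ('i *: pauli_string n (loc w [:: pY; pX; pZ])) := br s_YZI s_IYZ H H isT.
have s_IZZ : @Gn a13 n ('i *: pauli_string n (loc w [:: pI; pZ; pZ])) := br s_YYI s_YXZ H H isT.
exact: s_IZZ.
Qed.

Lemma d13c n w : (w + 3 <= n)%N -> @Gn a13 n ('i *: pauli_string n (loc w [:: pZ; pY; pI])).
Proof.
move=> H.
have s_YZI : @Gn a13 n ('i *: pauli_string n (loc w [:: pY; pZ; pI])) := gen_in (G := a13) (l := [:: pY; pZ; pI]) isT H.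
have s_IYZ : @Gn a13 n ('i *: pauli_string n (loc w [:: pI; pY; pZ])) := gen_in (G := a13) (l := [:: pI; pY; pZ]) isT H.
have s_YYI : @Gn a13 n ('i *: pauli_string n (loc w [:: pY; pY; pI])) := gen_in (G := a13) (l := [:: pY; pY; pI]) isT H.
have s_XXI : @Gn a13 n ('i *: pauli_string n (loc w [:: pX; pX; pI])) := gen_in (G := a13) (l := [:: pX; pX; pI]) isT H.
have s_IYY : @Gn a13 n ('i *: pauli_string n (loc w [:: pI; pY; pY])) := gen_in (G := a13) (l := [:: pI; pY; pY]) isT H.
have s_IXX : @Gn a13 n ('i *: pauli_string n (loc w [:: pI; pX; pX])) := gen_in (G := a13) (l := [:: pI; pX; pX]) isT H.
have s_YXZ : @Gn a13 n ('i *: pauli_string n (loc w [:: pY; pX; pZ])) := br s_YZI s_IYZ H H isT.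
have s_IZZ : @Gn a13 n ('i *: pauli_string n (loc w [:: pI; pZ; pZ])) := br s_YYI s_YXZ H H isT.
have s_XZY : @Gn a13 n ('i *: pauli_string n (loc w [:: pX; pZ; pY])) := br s_XXI s_IYY H H isT.
have s_YYX : @Gn a13 n ('i *: pauli_string n (loc w [:: pY; pY; pX])) := br s_IXX s_YZI H H isT.
have s_ZXZ : @Gn a13 n ('i *: pauli_string n (loc w [:: pZ; pX; pZ])) := br s_XZY s_YYX H H isT.
have s_ZYI : @Gn a13 n ('i *: pauli_string n (loc w [:: pZ; pY; pI])) := br s_IZZ s_ZXZ H H isT.
exact: s_ZYI.
Qed.

Lemma d13d n w : (w + 3 <= n)%N -> @Gn a13 n ('i *: pauli_string n (loc w [:: pI; pZ; pY])).
Proof.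
move=> H.
have s_YZI : @Gn a13 n ('i *: pauli_string n (loc w [:: pY; pZ; pI])) := gen_in (G := a13) (l := [:: pY; pZ; pI]) isT H.
have s_IYY : @Gn a13 n ('i *: pauli_string n (loc w [:: pI; pY; pY])) := gen_in (G := a13) (l := [:: pI; pY; pY]) isT H.
have s_YYI : @Gn a13 n ('i *: pauli_string n (loc w [:: pY; pY; pI])) := gen_in (G := a13) (l := [:: pY; pY; pI]) isT H.
have s_YXY : @Gn a13 n ('i *: pauli_string n (loc w [:: pY; pX; pY])) := br s_YZI s_IYY H H isT.
have s_IZY : @Gn a13 n ('i *: pauli_string n (loc w [:: pI; pZ; pY])) := br s_YYI s_YXY H H isT.
exact: s_IZY.
Qed.

Lemma d20a n w : (w + 3 <= n)%N -> @Gn a20 n ('i *: pauli_string n (loc w [:: pY; pZ; pI])).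
Proof.
move=> H.
have s_ZZI : @Gn a20 n ('i *: pauli_string n (loc w [:: pZ; pZ; pI])) := gen_in (G := a20) (l := [:: pZ; pZ; pI]) isT H.
have s_ZYI : @Gn a20 n ('i *: pauli_string n (loc w [:: pZ; pY; pI])) := gen_in (G := a20) (l := [:: pZ; pY; pI]) isT H.
have s_YYI : @Gn a20 n ('i *: pauli_string n (loc w [:: pY; pY; pI])) := gen_in (G := a20) (l := [:: pY; pY; pI]) isT H.
have s_IXI : @Gn a20 n ('i *: pauli_string n (loc w [:: pI; pX; pI])) := br s_ZZI s_ZYI H H isT.
have s_YZI : @Gn a20 n ('i *: pauli_string n (loc w [:: pY; pZ; pI])) := br s_YYI s_IXI H H isT.
exact: s_YZI.
Qed.

Lemma d20b n w : (w + 3 <= n)%N -> @Gn a20 n ('i *: pauli_string n (loc w [:: pI; pY; pZ])).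
Proof.
move=> H.
have s_IZZ : @Gn a20 n ('i *: pauli_string n (loc w [:: pI; pZ; pZ])) := gen_in (G := a20) (l := [:: pI; pZ; pZ]) isT H.
have s_ZYI : @Gn a20 n ('i *: pauli_string n (loc w [:: pZ; pY; pI])) := gen_in (G := a20) (l := [:: pZ; pY; pI]) isT H.
have s_ZZI : @Gn a20 n ('i *: pauli_string n (loc w [:: pZ; pZ; pI])) := gen_in (G := a20) (l := [:: pZ; pZ; pI]) isT H.
have s_ZXZ : @Gn a20 n ('i *: pauli_string n (loc w [:: pZ; pX; pZ])) := br s_IZZ s_ZYI H H isT.
have s_IYZ : @Gn a20 n ('i *: pauli_string n (loc w [:: pI; pY; pZ])) := br s_ZZI s_ZXZ H H isT.
exact: s_IYZ.
Qed.

Ltac direct h := apply: lc_gen; eexists; eexists; eexists; split; [|split; [exact h|reflexivity]]; by [].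

Local Close Scope complex_scope.
Local Close Scope ring_scope.

Theorem mainTheorem10 :
  (forall (n : nat), (4 <= n)%N ->
     forall M : 'M[C]_(2 ^ n), @Gn a11 n M <-> @Gn a16 n M) /\
  (forall (n : nat), (3 <= n)%N ->
     forall M : 'M[C]_(2 ^ n), @Gn a13 n M <-> @Gn a20 n M).
Proof.
split => n hn M; split; apply: lc_mono => {}M [A [B [j [hG [hj ->]]]]].
- case: A hG; case: B => //= _; direct hj.
- case: A hG; case: B => //= _; try direct hj.
  case: j hj => [|j] hj.
  + apply: (@tgt n pZ pY 0 [:: pZ; pY; pI; pI] 0) => //; exact: d11a.
  + apply: (@tgt n pZ pY 1 [:: pI; pZ; pY] j) => //; first by rewrite addn1.
    apply: d11b; by rewrite addn3.
- case: A hG; case: B => //= _; try direct hj.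
  case: j hj => [|j] hj.
  + apply: (@tgt n pY pZ 0 [:: pY; pZ; pI] 0) => //; exact: d20a.
  + apply: (@tgt n pY pZ 1 [:: pI; pY; pZ] j) => //; first by rewrite addn1.
    apply: d20b; by rewrite addn3.
- case: A hG; case: B => //= _; try direct hj.
  + case: j hj => [|j] hj.
    * apply: (@tgt n pZ pY 0 [:: pZ; pY; pI] 0) => //; exact: d13c.
    * apply: (@tgt n pZ pY 1 [:: pI; pZ; pY] j) => //; first by rewrite addn1.
      apply: d13d; by rewrite addn3.
  + case: j hj => [|j] hj.
    * apply: (@tgt n pZ pZ 0 [:: pZ; pZ; pI] 0) => //; exact: d13a.
    * apply: (@tgt n pZ pZ 1 [:: pI; pZ; pZ] j) => //; first by rewrite addn1.
      apply: d13b; by rewrite addn3.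
Qed.
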